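(* Given an approval-based SCV instance and a committee $W$, it can be checked in time polynomial in the size of the instance whether $W$ satisfies SW-JR.
   Context: An approval-based sub-committee voting (SCV) instance consists of a set of voters $N=\{1,\ldots,n\}$, a finite set of candidates $C$ partitioned into candidate subsets $C_1,\ldots,C_\ell$, positive integer quotas $k_j\le |C_j|$ with $k=\sum_{j=1}^\ell k_j$, and approval ballots $A_i\subseteq C$ for $i\in N$. A committee is a set $W\subseteq C$ with $|W\cap C_j|=k_j$ for every $j$. $W$ satisfies SW-JR if for every $X\subseteq N$ with $|X|\ge n/k$ and $|\bigcap_{i\in X}A_i|\ge 1$ we have $|W\cap \bigcup_{i\in X}A_i|\ge 1$. *)

(* Defs.v *)
From mathcomp Require Import all_boot all_algebra.
Set Implicit Arguments. Unset Strict Implicit. Unset Printing Implicit Defensive.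

(* Voters are 0..n_voters-1, candidates are 0..n_cands-1.                    *)
(* cand_group : candidate c belongs to subset C_j with j = nth 0 cand_group c *)
(* quotas     : k_0, ..., k_{l-1}  (l = size quotas)                          *)
(* ballots    : A_0, ..., A_{n-1}  (each a list of candidates)                *)
Record scv_instance := SCV {
  n_voters : nat;
  n_cands : nat;
  cand_group : seq nat;
  quotas : seq nat;
  ballots : seq (seq nat)
}.

Definition ballot (I : scv_instance) (i : nat) : seq nat := nth [::] (ballots I) i.
Definition n_groups (I : scv_instance) : nat := size (quotas I).
Definition quota (I : scv_instance) (j : nat) : nat := nth 0 (quotas I) j.
Definition in_group (I : scv_instance) (j c : nat) : bool :=
  (c < n_cands I) && (nth 0 (cand_group I) c == j).
Definition group_size (I : scv_instance) (j : nat) : nat :=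
  count (in_group I j) (iota 0 (n_cands I)).
Definition committee_size (I : scv_instance) : nat := sumn (quotas I).

Definition wf_instance (I : scv_instance) : Prop :=
  0 < n_voters I /\ 0 < n_groups I /\
  size (cand_group I) = n_cands I /\
  all (fun g => g < n_groups I) (cand_group I) /\
  size (ballots I) = n_voters I /\
  all (all (fun c => c < n_cands I)) (ballots I) /\
  all (fun j => (0 < quota I j) && (quota I j <= group_size I j))
          (iota 0 (n_groups I)).

Definition is_committee (I : scv_instance) (W : seq nat) : Prop :=
  [/\ uniq W, all (fun c => c < n_cands I) W
    & forall j, j < n_groups I -> count (in_group I j) W = quota I j].

Definition SW_JR (I : scv_instance) (W : seq nat) : Prop :=
  forall X : {set 'I_(n_voters I)},
    ((n_voters I)%:R / (committee_size I)%:R <= (#|X|)%:R :> rat)%R ->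
    (exists c, c < n_cands I /\ forall i : 'I_(n_voters I), i \in X -> c \in ballot I i) ->
    exists2 i : 'I_(n_voters I), i \in X & exists2 c, c \in W & c \in ballot I i.

(* Computational model: the weak call-by-value lambda calculus L             *)
(* (Forster, Kunze, Roth 2020: a reasonable model for time, counting         *)
(* beta-steps), with Scott encodings of data.                                *)
Inductive Lterm : Type :=
| Lvar (n : nat)
| Lapp (s t : Lterm)
| Llam (s : Lterm).

Fixpoint Lsubst (s : Lterm) (k : nat) (u : Lterm) : Lterm :=
  match s with
  | Lvar n => if n == k then u else Lvar n
  | Lapp s1 s2 => Lapp (Lsubst s1 k u) (Lsubst s2 k u)
  | Llam s1 => Llam (Lsubst s1 k.+1 u)
  end.

Inductive Lstep : Lterm -> Lterm -> Prop :=
| LstepBeta s t : Lstep (Lapp (Llam s) (Llam t)) (Lsubst s 0 (Llam t))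
| LstepAppL s s' t : Lstep s s' -> Lstep (Lapp s t) (Lapp s' t)
| LstepAppR s t t' : Lstep t t' -> Lstep (Lapp (Llam s) t) (Lapp (Llam s) t').

Fixpoint Lredn (k : nat) (s t : Lterm) : Prop :=
  match k with
  | 0 => s = t
  | k'.+1 => exists2 s', Lstep s s' & Lredn k' s' t
  end.

Fixpoint Lsize (s : Lterm) : nat :=
  match s with
  | Lvar n => n.+1
  | Lapp s1 s2 => (Lsize s1 + Lsize s2).+1
  | Llam s1 => (Lsize s1).+1
  end.

Fixpoint Lbound (k : nat) (s : Lterm) : bool :=
  match s with
  | Lvar n => n < k
  | Lapp s1 s2 => Lbound k s1 && Lbound k s2
  | Llam s1 => Lbound k.+1 s1
  end.
Definition Lclosed (s : Lterm) : bool := Lbound 0 s.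

Definition enc_bool (b : bool) : Lterm :=
  if b then Llam (Llam (Lvar 1)) else Llam (Llam (Lvar 0)).
Fixpoint enc_nat (n : nat) : Lterm :=
  match n with
  | 0 => Llam (Llam (Lvar 1))
  | n'.+1 => Llam (Llam (Lapp (Lvar 0) (enc_nat n')))
  end.
Fixpoint enc_list (A : Type) (f : A -> Lterm) (l : seq A) : Lterm :=
  match l with
  | [::] => Llam (Llam (Lvar 1))
  | a :: l' => Llam (Llam (Lapp (Lapp (Lvar 0) (f a)) (enc_list f l')))
  end.
Definition enc_pair (a b : Lterm) : Lterm := Llam (Lapp (Lapp (Lvar 0) a) b).

Definition enc_input (I : scv_instance) (W : seq nat) : Lterm :=
  enc_pair (enc_nat (n_voters I))
  (enc_pair (enc_nat (n_cands I))
  (enc_pair (enc_list enc_nat (cand_group I))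
  (enc_pair (enc_list enc_nat (quotas I))
  (enc_pair (enc_list (enc_list enc_nat) (ballots I))
            (enc_list enc_nat W))))).

(* Main.v *)
Require Import Defs.
From mathcomp Require Import all_boot all_order all_algebra.
From mathcomp Require Import zify.


Lemma Ltrans a b s u v : Lredn a s u -> Lredn b u v -> Lredn (a + b) s v.
Proof.
elim: a s => [|a IH] s /=; first by move=> ->.
by case=> s' H1 H2 Hb; exists s' => //; apply: IH.
Qed.

Lemma LappL a s s' t : Lredn a s s' -> Lredn a (Lapp s t) (Lapp s' t).
Proof.
elim: a s => [|a IH] s /=; first by move=> ->.
by case=> s1 H1 H2; exists (Lapp s1 t); [constructor | apply: IH].
Qed.

Lemma LappR a b t t' : Lredn a t t' -> Lredn a (Lapp (Llam b) t) (Lapp (Llam b) t').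
Proof.
elim: a t => [|a IH] t /=; first by move=> ->.
by case=> s1 H1 H2; exists (Lapp (Llam b) s1); [constructor | apply: IH].
Qed.

Lemma LctxL k1 k2 s s' t w :
  Lredn k1 s s' -> Lredn k2 (Lapp s' t) w -> Lredn (k1 + k2) (Lapp s t) w.
Proof. by move=> H1; apply: Ltrans; apply: LappL. Qed.

Lemma LctxR k1 k2 b t t' w :
  Lredn k1 t t' -> Lredn k2 (Lapp (Llam b) t') w -> Lredn (k1 + k2) (Lapp (Llam b) t) w.
Proof. by move=> H1; apply: Ltrans; apply: LappR. Qed.

Definition isLam (t : Lterm) : bool := if t is Llam _ then true else false.
Definition cv (t : Lterm) : bool := isLam t && Lclosed t.

Lemma Lbound_mono s k j : Lbound k s -> k <= j -> Lbound j s.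
Proof.
elim: s k j => [n|s1 IH1 s2 IH2|s IH] k j /=.
- by move=> H1 H2; apply: leq_trans H2.
- by case/andP=> H1 H2 Hk; rewrite (IH1 k j H1 Hk) (IH2 k j H2 Hk).
- by move=> H Hk; apply: (IH k.+1).
Qed.

Lemma Lsubst_bound s k j u : Lbound k s -> k <= j -> Lsubst s j u = s.
Proof.
elim: s k j => [n|s1 IH1 s2 IH2|s IH] k j /=.
- move=> H1 H2; case: eqP => // E; subst; by rewrite ltnNge H2 in H1.
- by case/andP=> H1 H2 Hk; rewrite (IH1 k j H1 Hk) (IH2 k j H2 Hk).
- by move=> H Hk; rewrite (IH k.+1 j.+1 H Hk).
Qed.

Lemma cv_bound t k : cv t -> Lbound k t.
Proof. by case/andP=> _ H; apply: Lbound_mono H _. Qed.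

Lemma Lsubst_cv t j u : cv t -> Lsubst t j u = t.
Proof. by move=> H; apply: (@Lsubst_bound _ 0) => //; case/andP: H. Qed.

Lemma Lbeta k b v w : cv v -> Lredn k (Lsubst b 0 v) w -> Lredn k.+1 (Lapp (Llam b) v) w.
Proof.
case: v => // v _ H; exists (Lsubst b 0 (Llam v)) => //; constructor.
Qed.

Lemma Lval v w : v = w -> Lredn 0 v w.
Proof. by []. Qed.

Lemma Lk k' k s w : Lredn k' s w -> k' = k -> Lredn k s w.
Proof. by move=> H <-. Qed.

Lemma Lunf k h h' t w : h = h' -> Lredn k (Lapp h' t) w -> Lredn k (Lapp h t) w.
Proof. by move=> ->. Qed.

Lemma cv_lam s : Lbound 1 s -> cv (Llam s).
Proof. by []. Qed.

Lemma cv_nat n : cv (enc_nat n).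
Proof.
suff H : forall k, Lbound k (enc_nat n) by rewrite /cv /Lclosed H andbT; case: n {H}.
by elim: n => [|n IH] k //=; rewrite IH.
Qed.

Lemma cv_bool b : cv (enc_bool b).
Proof. by case: b. Qed.

Lemma cv_list A (f : A -> Lterm) l : (forall x, cv (f x)) -> cv (enc_list f l).
Proof.
move=> Hf; suff H : forall k, Lbound k (enc_list f l) by rewrite /cv /Lclosed H andbT; case: l {H}.
elim: l => [|a l IH] k //=; by rewrite IH cv_bound.
Qed.

Lemma cv_pair a b : cv a -> cv b -> cv (enc_pair a b).
Proof. by move=> Ha Hb; rewrite /cv /Lclosed /= !cv_bound. Qed.

Lemma cv_if (b : bool) x y : cv x -> cv y -> cv (if b then x else y).
Proof. by case: b. Qed.

Lemma Lbound_lam k s : Lbound k.+1 s -> Lbound k (Llam s).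
Proof. by []. Qed.
Lemma Lbound_app k s t : Lbound k s -> Lbound k t -> Lbound k (Lapp s t).
Proof. by move=> /= -> ->. Qed.

Lemma enc_nat0 : enc_nat 0 = Llam (Llam (Lvar 1)). Proof. by []. Qed.
Lemma enc_natS n : enc_nat n.+1 = Llam (Llam (Lapp (Lvar 0) (enc_nat n))). Proof. by []. Qed.
Lemma enc_list_nil A (f : A -> Lterm) : enc_list f [::] = Llam (Llam (Lvar 1)). Proof. by []. Qed.
Lemma enc_list_cons A (f : A -> Lterm) a l :
  enc_list f (a :: l) = Llam (Llam (Lapp (Lapp (Lvar 0) (f a)) (enc_list f l))). Proof. by []. Qed.
Lemma enc_pair_eq a b : enc_pair a b = Llam (Lapp (Lapp (Lvar 0) a) b). Proof. by []. Qed.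
Lemma enc_true : enc_bool true = Llam (Llam (Lvar 1)). Proof. by []. Qed.
Lemma enc_false : enc_bool false = Llam (Llam (Lvar 0)). Proof. by []. Qed.


Lemma boolE kx ky (b : bool) xt yt x y :
  Lredn kx xt x -> Lredn ky yt y -> cv x -> cv y ->
  Lredn (kx + ky + 2) (Lapp (Lapp (enc_bool b) xt) yt) (if b then x else y).
Proof.
move=> Hx Hy cx cy.
apply: (@Lk ((kx + 1) + (ky + 1))); last by rewrite addnACA.
case: b; rewrite ?enc_true ?enc_false; (apply: LctxL; first by apply: LctxR Hx _; apply: Lbeta cx _; exact: erefl);
  apply: LctxR Hy _; apply: Lbeta cy _ => /=; last by [].
by rewrite Lsubst_cv.
Qed.

Lemma if_nat (b : bool) x y : (if b then enc_nat x else enc_nat y) = enc_nat (if b then x else y).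
Proof. by case: b. Qed.
Lemma if_bool (b : bool) x y : (if b then enc_bool x else enc_bool y) = enc_bool (if b then x else y).
Proof. by case: b. Qed.


Notation L := Llam.
Notation V := Lvar.
Notation A2 f a b := (Lapp (Lapp f a) b).
Notation call2 F a b := (Lapp (Lapp (Lapp F F) a) b).
Notation call5 F a b c d e := (Lapp (Lapp (Lapp (Lapp (Lapp (Lapp F F) a) b) c) d) e).
Notation T := (enc_bool true).
Notation Fa := (enc_bool false).

Definition Feq := L(L(L( A2 (V 1) (A2 (V 0) T (L Fa)) (L (A2 (V 1) Fa (L (call2 (V 4) (V 1) (V 0)))))))).
Definition Fmem := L(L(L( A2 (V 0) Fa (L(L( A2 (call2 Feq (V 3) (V 1)) T (call2 (V 4) (V 3) (V 0)) )))))).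
Definition Fhas := L(L(L( A2 (V 1) Fa (L(L( A2 (call2 Fmem (V 1) (V 2)) T (call2 (V 4) (V 0) (V 2)) )))))).
Definition Fsub := L(L(L( A2 (V 0) (V 1) (L (A2 (V 2) (enc_nat 0) (L (call2 (V 4) (V 0) (V 1)))))))).
Definition Fsubs := L(L(L( A2 (V 0) (V 1) (L(L( call2 (V 4) (call2 Fsub (V 3) (V 1)) (V 0) )))))).
Definition Fcnt := L(L(L(L(L(L( A2 (V 0) (V 1) (L(L( call5 (V 7) (V 6) (V 5) (V 4)
   (A2 (call2 Fmem (V 6) (V 1)) (A2 (call2 Fhas (V 1) (V 5)) (V 3) (call2 Fsubs (V 3) (V 4))) (V 3))
   (V 0) ))) )))))).
Definition Floop := L(L(L(L(L(L( A2 (V 0) T (L ( A2 (A2 (call5 Fcnt (V 0) (V 4) (V 3) (V 5) (V 2)) Fa (L T))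
   (call5 (V 6) (V 5) (V 4) (V 3) (V 2) (V 0)) Fa )))))))).
Definition Prog := L( Lapp (V 0) (L(L( Lapp (V 0) (L(L( Lapp (V 0) (L(L( Lapp (V 0) (L(L( Lapp (V 0)
   (L(L( call5 Floop (V 9) (V 0) (V 3) (V 1) (V 7) )))))))))))))))).

Lemma cv_Feq : cv Feq. Proof. by vm_compute. Qed.
Lemma cv_Fmem : cv Fmem. Proof. by vm_compute. Qed.
Lemma cv_Fhas : cv Fhas. Proof. by vm_compute. Qed.
Lemma cv_Fsub : cv Fsub. Proof. by vm_compute. Qed.
Lemma cv_Fsubs : cv Fsubs. Proof. by vm_compute. Qed.
Lemma cv_Fcnt : cv Fcnt. Proof. by vm_compute. Qed.
Lemma cv_Floop : cv Floop. Proof. by vm_compute. Qed.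
Lemma cv_Prog : cv Prog. Proof. by vm_compute. Qed.

Ltac solve_bound := lazymatch goal with
 | |- is_true (Lbound _ (Lvar _)) => reflexivity
 | |- is_true (Lbound _ (Lapp _ _)) => apply: Lbound_app; solve_bound
 | |- is_true (Lbound _ (Llam _)) => apply: Lbound_lam; solve_bound
 | |- _ => apply: cv_bound; solve_cv
end
with solve_cv := lazymatch goal with
 | |- is_true (cv (Llam _)) => apply: cv_lam; solve_bound
 | |- is_true (cv (enc_nat _)) => apply: cv_nat
 | |- is_true (cv (enc_bool _)) => apply: cv_bool
 | |- is_true (cv (enc_pair _ _)) => apply: cv_pair; solve_cv
 | |- is_true (cv (if _ then _ else _)) => apply: cv_if; solve_cv
 | |- is_true (cv (enc_list _ _)) => apply: cv_list => ?; solve_cv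
 | |- is_true (cv Feq) => exact: cv_Feq
 | |- is_true (cv Fmem) => exact: cv_Fmem
 | |- is_true (cv Fhas) => exact: cv_Fhas
 | |- is_true (cv Fsub) => exact: cv_Fsub
 | |- is_true (cv Fsubs) => exact: cv_Fsubs
 | |- is_true (cv Fcnt) => exact: cv_Fcnt
 | |- is_true (cv Floop) => exact: cv_Floop
end.

Ltac simp_subst :=
  lazymatch goal with |- Lredn ?k ?s ?w =>
   let s' := eval cbn -[enc_nat enc_list enc_bool enc_pair Feq Fmem Fhas Fsub Fsubs Fcnt Floop] in s in
   change (Lredn k s' w) end;
  repeat (rewrite Lsubst_cv; last solve_cv).

Ltac unf_head := first [ apply: enc_nat0 | apply: enc_natS | apply: enc_list_nil | apply: enc_list_cons
  | apply: enc_pair_eq | apply: enc_true | apply: enc_false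
  | match goal with |- ?F = _ => let F' := eval unfold F in F in exact (erefl F') end ].

Ltac specs := fail.

Lemma Lw k s w' w : Lredn k s w' -> w' = w -> Lredn k s w.
Proof. by move=> H <-. Qed.

Lemma LctxLL k1 k2 h h' x y w :
  Lredn k1 h h' -> Lredn k2 (Lapp (Lapp h' x) y) w -> Lredn (k1 + k2) (Lapp (Lapp h x) y) w.
Proof. by move=> H; apply: Ltrans; do 2 apply: LappL. Qed.

Ltac ev :=
  tryif (eapply Ltrans; [ first [ match goal with H : _ |- _ => eapply H; ev end | specs; ev ] | ])
  then ev
  else lazymatch goal with
  | |- Lredn _ (Lapp _ _) _ => ev_app
  | |- Lredn _ _ _ => apply: Lval; rewrite ?if_nat ?if_bool; reflexivity
  end
with ev_app :=
  lazymatch goal with |- Lredn _ ?s _ =>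
  lazymatch s with
  | Lapp (Lapp (enc_bool _) _) _ => eapply Ltrans; [ eapply boolE; [ev | ev | solve_cv | solve_cv] | ev ]
  | Lapp (Llam _) ?v =>
      tryif (assert (cv v) by solve_cv)
      then (eapply Lbeta; [ solve_cv | simp_subst; ev ])
      else (eapply LctxR; [ ev | ev ])
  | Lapp (Lapp (Lapp _ _) _) _ => eapply LctxLL; [ ev | ev ]
  | Lapp (Lapp _ _) _ => eapply LctxL; [ ev | ev ]
  | Lapp ?h _ => eapply Lunf; [ unf_head | ev ]
  end end.

Ltac evtop := eapply Lk; [eapply Lw; [ev | ] | ].

Definition pc r := if r is 0 then 2 else 3.
Fixpoint ceq a b := match a, b with 0, 0 => 7 | 0, _.+1 => 8 | _.+1, 0 => 10 | a.+1, b.+1 => 12 + ceq a b end.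
Fixpoint cmem c l := if l is x :: l then 9 + ceq c x + cmem c l else 5.
Fixpoint chas A W := if A is x :: A then 9 + cmem x W + chas A W else 5.
Fixpoint csub r q := match q, r with 0, _ => 5 | _.+1, 0 => 8 | q.+1, r.+1 => 9 + csub r q end.
Fixpoint csubs r qs := if qs is q :: qs then 7 + csub r q + csubs (r - q) qs else 5.
Definition stepr (c : nat) (W qs : seq nat) (r : nat) (A : seq nat) : nat := if c \in A then (if has (fun x => x \in W) A then r else foldl subn r qs) else r.
Fixpoint cntf c W qs r B := if B is A :: B then cntf c W qs (stepr c W qs r A) B else r.
Fixpoint ccnt c W qs r B := if B is A :: B then 14 + cmem c A + chas A W + csubs r qs + ccnt c W qs (stepr c W qs r A) B else 8.
Fixpoint loopf n W qs B c := if c is c'.+1 then (0 < cntf c' W qs n B) && loopf n W qs B c' else true.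
Fixpoint cloop n W qs B c := if c is c'.+1 then 11 + ccnt c' W qs n B + pc (cntf c' W qs n B) + cloop n W qs B c' else 8.
Ltac gen_costs := repeat match goal with
  | |- context [?f ?a ?b] => lazymatch f with ceq => idtac | cmem => idtac | chas => idtac | csub => idtac | csubs => idtac end;
     generalize (f a b); intro
  | |- context [?f ?a ?b ?c ?d ?e] => lazymatch f with ccnt => idtac | cloop => idtac end; generalize (f a b c d e); intro
  | |- context [pc ?a] => generalize (pc a); intro
  end.
Lemma eq_spec a : forall b xa xb ka kb, Lredn ka xa (enc_nat a) -> Lredn kb xb (enc_nat b) ->
  Lredn (ka + kb + ceq a b) (call2 Feq xa xb) (enc_bool (a == b)).
Proof.
elim: a => [|a IH] [|b] xa xb ka kb Ha Hb; evtop; try by [].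
all: rewrite /=; lia.
Qed.
Ltac specs ::= eapply eq_spec.

Lemma mem_spec l : forall c xc xl kc kl, Lredn kc xc (enc_nat c) -> Lredn kl xl (enc_list enc_nat l) ->
  Lredn (kc + kl + cmem c l) (call2 Fmem xc xl) (enc_bool (c \in l)).
Proof.
elim: l => [|x l IH] c xc xl kc kl Hc Hl; evtop; try by [].
all: try (by rewrite in_cons; case: (c == x)).
all: rewrite /=; lia.
Qed.
Ltac specs ::= first [eapply eq_spec | eapply mem_spec].

Lemma has_spec A : forall W xA xW kA kW, Lredn kA xA (enc_list enc_nat A) -> Lredn kW xW (enc_list enc_nat W) ->
  Lredn (kA + kW + chas A W) (call2 Fhas xA xW) (enc_bool (has (fun x => x \in W) A)).
Proof.
elim: A => [|x A IH] W xA xW kA kW HA HW; evtop; try by [].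
all: try (by case: (x \in W)).
all: rewrite /=; lia.
Qed.
Ltac specs ::= first [eapply eq_spec | eapply mem_spec | eapply has_spec].

Lemma sub_spec q : forall r xr xq kr kq, Lredn kr xr (enc_nat r) -> Lredn kq xq (enc_nat q) ->
  Lredn (kr + kq + csub r q) (call2 Fsub xr xq) (enc_nat (r - q)).
Proof.
elim: q => [|q IH] [|r] xr xq kr kq Hr Hq; evtop; try by [].
all: rewrite /=; lia.
Qed.
Ltac specs ::= first [eapply eq_spec | eapply mem_spec | eapply has_spec | eapply sub_spec].

Lemma subs_spec qs : forall r xr xqs kr kqs, Lredn kr xr (enc_nat r) -> Lredn kqs xqs (enc_list enc_nat qs) ->
  Lredn (kr + kqs + csubs r qs) (call2 Fsubs xr xqs) (enc_nat (foldl subn r qs)).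
Proof.
elim: qs => [|q qs IH] r xr xqs kr kqs Hr Hqs; evtop; try by [].
all: rewrite /=; gen_costs; lia.
Qed.
Ltac specs ::= first [eapply eq_spec | eapply mem_spec | eapply has_spec | eapply sub_spec | eapply subs_spec].

Lemma cnt_spec B : forall c W qs r xc xW xqs xr xB kc kW kqs kr kB,
  Lredn kc xc (enc_nat c) -> Lredn kW xW (enc_list enc_nat W) -> Lredn kqs xqs (enc_list enc_nat qs) ->
  Lredn kr xr (enc_nat r) -> Lredn kB xB (enc_list (enc_list enc_nat) B) ->
  Lredn (kc + kW + kqs + kr + kB + ccnt c W qs r B) (call5 Fcnt xc xW xqs xr xB) (enc_nat (cntf c W qs r B)).
Proof.
elim: B => [|A B IH] c W qs r xc xW xqs xr xB kc kW kqs kr kB Hc HW Hqs Hr HB; evtop; try by [].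
all: rewrite /= /stepr /=; gen_costs; lia.
Qed.
Ltac specs ::= first [eapply eq_spec | eapply mem_spec | eapply has_spec | eapply sub_spec | eapply subs_spec | eapply cnt_spec].



Lemma posE r : Lredn (pc r)
  (Lapp (Lapp (enc_nat r) (enc_bool false)) (Llam (enc_bool true))) (enc_bool (0 < r)).
Proof. case: r => [|r]; evtop; by []. Qed.
Ltac specs ::= first [eapply eq_spec | eapply mem_spec | eapply has_spec | eapply sub_spec | eapply subs_spec | eapply cnt_spec | eapply posE].

Lemma loop_spec c : forall n W qs B xn xW xqs xB xc kn kW kqs kB kc,
  Lredn kn xn (enc_nat n) -> Lredn kW xW (enc_list enc_nat W) -> Lredn kqs xqs (enc_list enc_nat qs) ->
  Lredn kB xB (enc_list (enc_list enc_nat) B) -> Lredn kc xc (enc_nat c) ->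
  Lredn (kn + kW + kqs + kB + kc + cloop n W qs B c) (call5 Floop xn xW xqs xB xc) (enc_bool (loopf n W qs B c)).
Proof.
elim: c => [|c IH] n W qs B xn xW xqs xB xc kn kW kqs kB kc Hn HW Hqs HB Hc; evtop; try by [].
all: rewrite /=; gen_costs; lia.
Qed.
Ltac specs ::= first [eapply eq_spec | eapply mem_spec | eapply has_spec | eapply sub_spec | eapply subs_spec | eapply cnt_spec | eapply posE | eapply loop_spec].

Lemma prog_spec I W : Lredn (16 + cloop (n_voters I) W (quotas I) (ballots I) (n_cands I))
  (Lapp Prog (enc_input I W)) (enc_bool (loopf (n_voters I) W (quotas I) (ballots I) (n_cands I))).
Proof.
rewrite /enc_input; evtop; try by [].
rewrite /=; gen_costs; lia.
Qed.

Import Order.TTheory GRing.Theory Num.Theory.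

Lemma card_nth (T : Type) (x0 : T) (P : pred T) (s : seq T) n : size s = n ->
  #|[set i : 'I_n | P (nth x0 s i)]| = count P s.
Proof.
move=> <-.
rewrite cardsE cardE /enum_mem size_filter -enumT.
have -> : count (mem [pred i : 'I_(size s) | P (nth x0 s i)]) (enum 'I_(size s))
        = count (fun j => P (nth x0 s j)) (map val (enum 'I_(size s))) by rewrite count_map.
by rewrite val_enum_ord -count_map -/(mkseq _ _) mkseq_nth.
Qed.

Lemma foldl_subn r qs : foldl subn r qs = r - sumn qs.
Proof. by elim: qs r => [|q qs IH] r /=; rewrite ?subn0 // IH subnDA. Qed.

Definition mc c (W : seq nat) (B : seq (seq nat)) :=
  count (fun A : seq nat => (c \in A) && ~~ has (fun x => x \in W) A) B.

Lemma cntf_eq c W qs r B : cntf c W qs r B = r - sumn qs * mc c W B.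
Proof.
elim: B r => [|A B IH] r /=; first by rewrite muln0 subn0.
rewrite IH /stepr /mc /= -/(mc c W B) foldl_subn.
case: (c \in A); case: (has _ A) => /=; by rewrite ?add0n ?mulnDr ?muln1 ?subnDA.
Qed.

Lemma loopf_eq n W qs B nc :
  loopf n W qs B nc = true <-> forall c, c < nc -> sumn qs * mc c W B < n.
Proof.
elim: nc => [|nc IH] /=; first by split => // _ c.
rewrite cntf_eq subn_gt0; split.
  case/andP=> H1 /IH H2 c; rewrite ltnS leq_eqVlt; case/orP=> [/eqP->//|]; exact: H2.
move=> H; rewrite H // andTb; apply/IH => c Hc; apply: H; exact: ltnW.
Qed.

Lemma rat_iff n k x : 0 < k -> (n%:R / k%:R <= x%:R :> rat)%R = (n <= x * k).
Proof. by move=> Hk; rewrite ler_pdivrMr ?ltr0n // -natrM ler_nat. Qed.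

Lemma swjr_iff I W : wf_instance I ->
  (forall c, c < n_cands I -> committee_size I * mc c W (ballots I) < n_voters I) <-> SW_JR I W.
Proof.
case=> Hn [Hl [_ [_ [HB [_ Hq]]]]].
have Hk : 0 < committee_size I.
  move: Hq; rewrite /committee_size /n_groups /quota in Hl *.
  case: (quotas I) Hl => [|q qs] //= _; rewrite /= => /andP [/andP [H _] _].
  by apply: leq_trans H (leq_addr _ _).
set Xc := fun c => [set i : 'I_(n_voters I) | (c \in ballot I i) && ~~ has (fun x => x \in W) (ballot I i)].
have cXc c : #|Xc c| = mc c W (ballots I).
  by rewrite /Xc /ballot (@card_nth _ [::] (fun A : seq nat => (c \in A) && ~~ has (fun x => x \in W) A) _ _ HB).
split.
- move=> H X Hrat [c [Hc Hall]].
  case: (boolP [exists i in X, has (fun x => x \in W) (ballot I i)]).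
    case/existsP=> i /andP [HiX /hasP [d Hd1 Hd2]]; exists i => //; by exists d.
  rewrite negb_exists_in => /forallP Hno.
  have Hsub : X \subset Xc c.
    apply/subsetP => i HiX; rewrite inE Hall //=.
    by move: (Hno i); rewrite HiX.
  move: Hrat; rewrite rat_iff // => Hle.
  have := H c Hc; rewrite ltnNge mulnC; move/negP; case.
  apply: leq_trans Hle _; rewrite leq_mul2r -cXc subset_leq_card ?orbT //.
- move=> H c Hc; rewrite ltnNge; apply/negP => Hle.
  have [i HiX [d Hd1 Hd2]] := H (Xc c) (ltac:(by rewrite rat_iff // cXc mulnC))
     (ltac:(by exists c; split => // i; rewrite inE; case/andP)).
  move: HiX; rewrite inE => /andP [_ /hasP []]; by exists d.
Qed.


Lemma Lsize_nat n : n < Lsize (enc_nat n).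
Proof. elim: n => [|n IH] //=; lia. Qed.

Lemma Lsize_size (T : Type) (f : T -> Lterm) l : size l < Lsize (enc_list f l).
Proof. elim: l => [|a l IH] //=; lia. Qed.

Lemma Lsize_lnat (l : seq nat) x : x \in l -> x < Lsize (enc_list enc_nat l).
Proof.
elim: l => [|a l IH] //=; rewrite in_cons; case/orP=> [/eqP->|/IH]; have := Lsize_nat a; lia.
Qed.

Lemma Lsize_lballot (B : seq (seq nat)) A : A \in B ->
  size A < Lsize (enc_list (enc_list enc_nat) B) /\ forall x, x \in A -> x < Lsize (enc_list (enc_list enc_nat) B).
Proof.
elim: B => [|a B IH] //=; rewrite in_cons; case/orP=> [/eqP->|/IH [H1 H2]].
  have := Lsize_size _ enc_nat a => H; split; first by apply: leq_trans H _; lia.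
  move=> x /Lsize_lnat H'; apply: leq_trans H' _; lia.
split; first by apply: leq_trans H1 _; lia.
move=> x /H2 H; apply: leq_trans H _; lia.
Qed.

Lemma Lsize_pair a b : Lsize a < Lsize (enc_pair a b) /\ Lsize b < Lsize (enc_pair a b).
Proof. rewrite /=; lia. Qed.

Definition SZ I W := Lsize (enc_input I W).

Lemma input_sizes I W : let SZ := SZ I W in
  n_voters I < SZ /\ n_cands I < SZ /\ size W < SZ /\ (forall x, x \in W -> x < SZ) /\
      size (quotas I) < SZ /\ (forall x, x \in quotas I -> x < SZ) /\ size (ballots I) < SZ /\
      (forall A, A \in ballots I -> size A < SZ /\ forall x, x \in A -> x < SZ).
Proof.
rewrite /SZ /enc_input.
set t5 := enc_pair (enc_list (enc_list enc_nat) (ballots I)) (enc_list enc_nat W).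
set t4 := enc_pair (enc_list enc_nat (quotas I)) t5.
set t3 := enc_pair (enc_list enc_nat (cand_group I)) t4.
set t2 := enc_pair (enc_nat (n_cands I)) t3.
have [h1 h2] := Lsize_pair (enc_nat (n_voters I)) t2.
have [h3 h4] := Lsize_pair (enc_nat (n_cands I)) t3.
have [h5 h6] := Lsize_pair (enc_list enc_nat (cand_group I)) t4.
have [h7 h8] := Lsize_pair (enc_list enc_nat (quotas I)) t5.
have [h9 h10] := Lsize_pair (enc_list (enc_list enc_nat) (ballots I)) (enc_list enc_nat W).
have w1 := Lsize_size _ enc_nat W.
have q1 := Lsize_size _ enc_nat (quotas I).
have b1 := Lsize_size _ (enc_list enc_nat) (ballots I).
have := Lsize_nat (n_voters I); have := Lsize_nat (n_cands I).
move: h1 h2 h3 h4 h5 h6 h7 h8 h9 h10 w1 q1 b1.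
rewrite -/t2 -/t3 -/t4 -/t5.
move=> h1 h2 h3 h4 h5 h6 h7 h8 h9 h10 w1 q1 b1 n1 n2.
clearbody t2 t3 t4 t5.
split; first lia. split; first lia. split; first lia. split.
  move=> x /Lsize_lnat H; apply: leq_trans H _; lia.
split; first lia. split.
  move=> x /Lsize_lnat H; apply: leq_trans H _; lia.
split; first lia.
move=> A /Lsize_lballot [HA1 HA2]; split; first by apply: leq_trans HA1 _; lia.
move=> x /HA2 H; apply: leq_trans H _; lia.
Qed.

Lemma ceq_le a b : ceq a b <= 12 * a.+1.
Proof. elim: a b => [|a IH] [|b] /=; try lia. have := IH b; lia. Qed.

Lemma cmem_le (c : nat) (l : seq nat) : cmem c l <= 5 + size l * (9 + 12 * c.+1).
Proof. elim: l => [|x l IH] /=; first lia. have := ceq_le c x; nia. Qed.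

Lemma chas_le (A W : seq nat) (X : nat) : (forall x, x \in A -> cmem x W <= X) -> chas A W <= 5 + size A * (9 + X).
Proof.
elim: A => [|x A IH] H /=; first lia.
have H1 := H x (mem_head _ _).
have H2 : chas A W <= 5 + size A * (9 + X) by apply: IH => y Hy; apply: H; rewrite in_cons Hy orbT.
nia.
Qed.

Lemma csub_le r q : csub r q <= 8 + 9 * q.
Proof. elim: q r => [|q IH] [|r] /=; try lia. have := IH r; lia. Qed.

Lemma csubs_le (r : nat) (qs : seq nat) (X : nat) : (forall q, q \in qs -> 8 + 9 * q <= X) -> csubs r qs <= 5 + size qs * (7 + X).
Proof.
elim: qs r => [|q qs IH] r H /=; first lia.
have H1 := H q (mem_head _ _). have := csub_le r q.
have H2 : csubs (r - q) qs <= 5 + size qs * (7 + X) by apply: IH => y Hy; apply: H; rewrite in_cons Hy orbT.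
nia.
Qed.

Lemma ccnt_le (c : nat) (W qs : seq nat) (r : nat) (B : seq (seq nat)) (X : nat) : (forall (A : seq nat) (r : nat), A \in B -> cmem c A + chas A W + csubs r qs <= X) ->
  ccnt c W qs r B <= 8 + size B * (14 + X).
Proof.
elim: B r => [|A B IH] r H /=; first lia.
have H1 := H A r (mem_head _ _).
have H2 : ccnt c W qs (stepr c W qs r A) B <= 8 + size B * (14 + X)
  by apply: IH => A' r' Hy; apply: H; rewrite in_cons Hy orbT.
nia.
Qed.

Lemma cloop_le (n : nat) (W qs : seq nat) (B : seq (seq nat)) (nc X : nat) : (forall c, c < nc -> ccnt c W qs n B <= X) ->
  cloop n W qs B nc <= 8 + nc * (14 + X).
Proof.
elim: nc => [|nc IH] H /=; first lia.
have H1 := H nc (ltnSn _).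
have H2 := IH (fun c Hc => H c (ltnW Hc)).
have : pc (cntf nc W qs n B) <= 3 by rewrite /pc; case: (cntf _ _ _ _ _).
nia.
Qed.

Lemma pstep P j a x c0 c1 K : 0 < P -> a <= P -> x <= K * P ^ j ->
  c0 + a * (c1 + x) <= (c0 + c1 + K) * P ^ j.+1.
Proof.
move=> HP Ha Hx.
have HQ : 0 < P ^ j by rewrite expn_gt0 HP.
rewrite expnS; move: HQ Hx; set Q := P ^ j => HQ Hx.
apply: (@leq_trans (c0 + P * (c1 + K * Q))).
  by rewrite leq_add2l; apply: leq_mul => //; rewrite leq_add2l.
have HR : P <= P * Q by rewrite leq_pmulr.
have HR1 : 0 < P * Q by rewrite muln_gt0 HP HQ.
rewrite mulnDr !mulnDl (mulnC K) mulnA (mulnC P).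
rewrite -addnA leq_add //; first by rewrite leq_pmulr.
by rewrite (mulnC K) leq_add2r leq_mul2l HR orbT.
Qed.

Lemma pmono P i j : 0 < P -> i <= j -> P ^ i <= P ^ j.
Proof. by move=> HP Hij; apply: leq_pexp2l. Qed.

Lemma total_bound I W : wf_instance I ->
  16 + cloop (n_voters I) W (quotas I) (ballots I) (n_cands I) <= 155 * (Lsize (enc_input I W)).+1 ^ 5.
Proof.
move=> _.
have [hn [hc [hW [hWx [hq [hqx [hB hBx]]]]]]] := input_sizes I W.
rewrite -/(SZ I W); set P := SZ I W in hn hc hW hWx hq hqx hB hBx *.
have HP : 0 < P by apply: leq_ltn_trans hn.
have P12 : P ^ 1 <= P ^ 2 by apply: pmono.
have P23 : P ^ 2 <= P ^ 3 by apply: pmono.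
have memb c A : c < P -> size A < P -> cmem c A <= 26 * P ^ 2.
  move=> h1 h2; apply: leq_trans (cmem_le c A) _.
  apply: (@pstep P 1 (size A) (12 * c.+1) 5 9 12) => //; first exact: ltnW.
  by rewrite expn1 leq_mul2l h1.
have hasb A : A \in ballots I -> chas A W <= 40 * P ^ 3.
  move=> HA; have [hA1 hA2] := hBx A HA.
  apply: leq_trans (chas_le A W (26 * P ^ 2) _) _.
    by move=> x Hx; apply: memb; [apply: hA2 | ].
  apply: (@pstep P 2 (size A) (26 * P ^ 2) 5 9 26) => //; exact: ltnW.
have subsb r : csubs r (quotas I) <= 29 * P ^ 2.
  apply: leq_trans (csubs_le r (quotas I) (17 * P ^ 1) _) _.
    move=> q Hq; have := hqx q Hq; rewrite expn1; lia.
  apply: (@pstep P 1 (size (quotas I)) (17 * P ^ 1) 5 7 17) => //; exact: ltnW.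
have cntb c r : c < P -> ccnt c W (quotas I) r (ballots I) <= 117 * P ^ 4.
  move=> Hc; apply: leq_trans (ccnt_le c W (quotas I) r (ballots I) (95 * P ^ 3) _) _.
    move=> A r' HA; have [hA1 _] := hBx A HA.
    have := memb c A Hc hA1; have := hasb A HA; have := subsb r'.
    lia.
  apply: (@pstep P 3 (size (ballots I)) (95 * P ^ 3) 8 14 95) => //; exact: ltnW.
have := cloop_le (n_voters I) W (quotas I) (ballots I) (n_cands I) (117 * P ^ 4) (fun c Hc => cntb c (n_voters I) (ltn_trans Hc hc)).
have : 8 + n_cands I * (14 + 117 * P ^ 4) <= 139 * P ^ 5.
  apply: (@pstep P 4 (n_cands I) (117 * P ^ 4) 8 14 117) => //; exact: ltnW.
have : P ^ 5 <= P.+1 ^ 5 by rewrite leq_exp2r.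
have : 1 <= P ^ 5 by rewrite expn_gt0 HP.
lia.
Qed.

Theorem mainTheorem7 :
  exists (s : Lterm) (c d : nat),
    Lclosed s /\
    forall (I : scv_instance) (W : seq nat),
      wf_instance I -> is_committee I W ->
      exists (t : nat) (b : bool),
        [/\ t <= c * (Lsize (enc_input I W)).+1 ^ d,
            Lredn t (Lapp s (enc_input I W)) (enc_bool b)
          & b = true <-> SW_JR I W].
Proof.
exists Prog, 155, 5; split; first by vm_compute.
move=> I W Hwf _.
exists (16 + cloop (n_voters I) W (quotas I) (ballots I) (n_cands I)),
       (loopf (n_voters I) W (quotas I) (ballots I) (n_cands I)).
split; first exact: total_bound.
  exact: prog_spec.
rewrite loopf_eq; exact: swjr_iff.
Qed.
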